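(* Consider two simple totally unimodular matrices $$A_1=\begin{pmatrix}B&0&0&0\\ b_1^t&1&0&1\\ b_2^t&0&1&1\end{pmatrix},\qquad A_2=\begin{pmatrix}c_1^t&1&0&1\\ c_2^t&0&1&1\\ C&0&0&0\end{pmatrix},$$ where $B\in M_{g_1,n_1}(\mathbb{Z})$, $C\in M_{g_2,n_2}(\mathbb{Z})$ and $b_1,b_2,c_1,c_2$ are integer vectors, and assume that $\overline{Q_i}$ is well-suited for $A_i$ for $i=1,2$. Then one can write $$\overline{Q_1}=\begin{pmatrix}Q_1&r_1&s_1\\ r_1^t&1&-1/2\\ s_1^t&-1/2&1\end{pmatrix},\qquad \overline{Q_2}=\begin{pmatrix}1&-1/2&r_2^t\\ -1/2&1&s_2^t\\ r_2&s_2&Q_2\end{pmatrix}$$ with $Q_i\in M_{g_i,g_i}(\mathbb{R})$ and $r_i,s_i\in\mathbb{R}^{g_i}$, and, setting $$M=\tfrac43\left(r_1r_2^t+s_1s_2^t\right)+\tfrac23\left(r_1s_2^t+s_1r_2^t\right)\in M_{g_1,g_2}(\mathbb{R}),$$ the matrix $$\overline{Q}:=\begin{pmatrix}Q_1&r_1&s_1&M\\ r_1^t&1&-1/2&r_2^t\\ s_1^t&-1/2&1&s_2^t\\ M^t&r_2&s_2&Q_2\end{pmatrix}\ \text{ is well-suited for }\ A=\begin{pmatrix}B&0&0&0&0\\ b_1^t&c_1^t&1&0&1\\ b_2^t&c_2^t&0&1&1\\ 0&C&0&0&0\end{pmatrix}.$$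
   Context: A real matrix is totally unimodular if every square submatrix has determinant $-1,0$ or $1$; it is simple if it has no zero column and no two proportional columns. For a simple totally unimodular $A\in M_{g,n}(\mathbb{Z})$, a symmetric matrix $Q\in M_{g,g}(\mathbb{R})$ is well-suited for $A$ if $Q$ is positive definite and for every $\xi\in\mathbb{Z}^g\setminus\{0\}$ one has $\xi^tQ\xi\ge1$, with equality if and only if $\xi$ or $-\xi$ is a column vector of $A$. *)

(* Defs.v *)
From HB Require Import structures.
From mathcomp Require Import all_boot all_order all_algebra.
From mathcomp Require Import reals.
Set Implicit Arguments. Unset Strict Implicit. Unset Printing Implicit Defensive.
Import Order.TTheory GRing.Theory Num.Theory.
Local Open Scope ring_scope.

Definition totally_unimodular (g n : nat) (A : 'M[int]_(g, n)) : Prop :=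
  forall (k : nat) (f : 'I_k -> 'I_g) (h : 'I_k -> 'I_n),
    injective f -> injective h ->
    \det (mxsub f h A) \in [:: -1; 0; 1].

Definition simple_mx (g n : nat) (A : 'M[int]_(g, n)) : Prop :=
  (forall j : 'I_n, col j A != 0) /\
  (forall j k : 'I_n, j != k ->
     ~ exists l : rat, map_mx intr (col j A) = l *: map_mx intr (col k A)).

Definition qform (R : realType) (g : nat) (Q : 'M[R]_g) (xi : 'cV[R]_g) : R :=
  (xi^T *m Q *m xi) 0 0.

Definition int_vec (R : realType) (g : nat) (xi : 'cV[int]_g) : 'cV[R]_g :=
  map_mx (fun z : int => z%:~R) xi.

Definition pos_def (R : realType) (g : nat) (Q : 'M[R]_g) : Prop :=
  forall x : 'cV[R]_g, x != 0 -> 0 < qform Q x.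

Definition well_suited (R : realType) (g n : nat) (Q : 'M[R]_g)
    (A : 'M[int]_(g, n)) : Prop :=
  Q^T = Q /\ pos_def Q /\
  forall xi : 'cV[int]_g, xi != 0 ->
    1 <= qform Q (int_vec R xi) /\
    (qform Q (int_vec R xi) = 1 <->
       exists j : 'I_n, col j A = xi \/ col j A = - xi).

(* The 2x3 block [[1,0,1],[0,1,1]]. *)
Definition E23 : 'M[int]_(2, 3) :=
  \matrix_(i < 2, j < 3) (if j == 2 :> nat then 1 else ((i : nat) == j)%:~R).

Definition T22 (R : realType) : 'M[R]_2 :=
  \matrix_(i < 2, j < 2) (if i == j :> nat then 1 else - (1 / 2)).

Definition A1mx (g1 n1 : nat) (B : 'M[int]_(g1, n1)) (b1 b2 : 'rV[int]_n1)
  : 'M[int]_(g1 + 2, n1 + 3) := block_mx B 0 (col_mx b1 b2) E23.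

Definition A2mx (g2 n2 : nat) (C : 'M[int]_(g2, n2)) (c1 c2 : 'rV[int]_n2)
  : 'M[int]_(2 + g2, n2 + 3) := block_mx (col_mx c1 c2) E23 C 0.

Definition Amx (g1 n1 g2 n2 : nat) (B : 'M[int]_(g1, n1)) (b1 b2 : 'rV[int]_n1)
    (C : 'M[int]_(g2, n2)) (c1 c2 : 'rV[int]_n2)
  : 'M[int]_(g1 + 2 + g2, n1 + n2 + 3) :=
  col_mx
    (col_mx (row_mx (row_mx B 0) 0)
            (row_mx (row_mx (col_mx b1 b2) (col_mx c1 c2)) E23))
    (row_mx (row_mx 0 C) 0).

Definition Q1bar_shape (R : realType) (g1 : nat) (Q1 : 'M[R]_g1)
    (r1 s1 : 'cV[R]_g1) : 'M[R]_(g1 + 2) :=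
  block_mx Q1 (row_mx r1 s1) (col_mx r1^T s1^T) (T22 R).

Definition Q2bar_shape (R : realType) (g2 : nat) (Q2 : 'M[R]_g2)
    (r2 s2 : 'cV[R]_g2) : 'M[R]_(2 + g2) :=
  block_mx (T22 R) (col_mx r2^T s2^T) (row_mx r2 s2) Q2.

Definition Mmx (R : realType) (g1 g2 : nat) (r1 s1 : 'cV[R]_g1)
    (r2 s2 : 'cV[R]_g2) : 'M[R]_(g1, g2) :=
  (4 / 3) *: (r1 *m r2^T + s1 *m s2^T) + (2 / 3) *: (r1 *m s2^T + s1 *m r2^T).

Definition Qbar_glued (R : realType) (g1 g2 : nat) (Q1 : 'M[R]_g1)
    (r1 s1 : 'cV[R]_g1) (Q2 : 'M[R]_g2) (r2 s2 : 'cV[R]_g2)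
  : 'M[R]_(g1 + 2 + g2) :=
  let M := Mmx r1 s1 r2 s2 in
  block_mx (Q1bar_shape Q1 r1 s1) (col_mx M (col_mx r2^T s2^T))
           (row_mx M^T (row_mx r2 s2)) Q2.

(* Main.v *)
Require Import Defs.
From HB Require Import structures.
From mathcomp Require Import all_boot all_order all_algebra.
From mathcomp Require Import reals.
From mathcomp Require Import ring lra.
Import Order.TTheory GRing.Theory Num.Theory.
Set Implicit Arguments. Unset Strict Implicit. Unset Printing Implicit Defensive.
Local Open Scope ring_scope.

Section BF.
Variable R : realType.
Definition bform m n (B : 'M[R]_(m, n)) (u : 'cV[R]_m) (v : 'cV[R]_n) : R :=
  (u^T *m B *m v) 0 0.
Definition dot m (u v : 'cV[R]_m) : R := (u^T *m v) 0 0.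

Lemma qformE m (Q : 'M[R]_m) u : qform Q u = bform Q u u. Proof. by []. Qed.

Lemma bform_block m1 m2 n1 n2 (A : 'M[R]_(m1,n1)) (B : 'M[R]_(m1,n2))
  (C : 'M[R]_(m2,n1)) (D : 'M[R]_(m2,n2)) u1 u2 v1 v2 :
  bform (block_mx A B C D) (col_mx u1 u2) (col_mx v1 v2) =
  bform A u1 v1 + bform B u1 v2 + bform C u2 v1 + bform D u2 v2.
Proof.
rewrite /bform tr_col_mx mul_row_block mul_row_col !mulmxDl !mxE; ring.
Qed.

Lemma bform_col m1 m2 n (A : 'M[R]_(m1,n)) (B : 'M[R]_(m2,n)) u1 u2 v :
  bform (col_mx A B) (col_mx u1 u2) v = bform A u1 v + bform B u2 v.
Proof. by rewrite /bform tr_col_mx mul_row_col mulmxDl mxE. Qed.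

Lemma bform_row m n1 n2 (A : 'M[R]_(m,n1)) (B : 'M[R]_(m,n2)) u v1 v2 :
  bform (row_mx A B) u (col_mx v1 v2) = bform A u v1 + bform B u v2.
Proof. by rewrite /bform mul_mx_row mul_row_col mxE. Qed.

Lemma bform_tr m n (A : 'M[R]_(m,n)) u v : bform A^T u v = bform A v u.
Proof.
rewrite /bform; have -> : u^T *m A^T *m v = (v^T *m A *m u)^T.
  by rewrite !trmx_mul !trmxK mulmxA.
by rewrite mxE.
Qed.

Lemma bformD m n (A B : 'M[R]_(m,n)) u v : bform (A + B) u v = bform A u v + bform B u v.
Proof. by rewrite /bform mulmxDr mulmxDl mxE. Qed.

Lemma bformZ m n c (A : 'M[R]_(m,n)) u v : bform (c *: A) u v = c * bform A u v.
Proof. by rewrite /bform -scalemxAr -scalemxAl mxE. Qed.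

Lemma bform0 m n (A : 'M[R]_(m,n)) v : bform A 0 v = 0.
Proof. by rewrite /bform trmx0 !mul0mx mxE. Qed.

Lemma bform0r m n (A : 'M[R]_(m,n)) u : bform A u 0 = 0.
Proof. by rewrite /bform mulmx0 mxE. Qed.

Lemma bform_c1 m (r : 'cV[R]_m) u (w : 'cV[R]_1) : bform r u w = dot u r * w 0 0.
Proof. by rewrite /bform /dot mxE big_ord1. Qed.

Lemma bform_outer m n (r : 'cV[R]_m) (s : 'cV[R]_n) x y :
  bform (r *m s^T) x y = dot x r * dot y s.
Proof.
rewrite /bform /dot -!mulmxA mulmxA mxE big_ord1.
have -> : s^T *m y = (y^T *m s)^T by rewrite trmx_mul trmxK.
by rewrite [X in _ * X]mxE.
Qed.

Lemma bform_sc (c : R) (u v : 'cV[R]_1) : bform (c%:M) u v = c * u 0 0 * v 0 0.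
Proof. by rewrite /bform mul_mx_scalar -scalemxAl mxE /= mxE big_ord1 !mxE; ring. Qed.

Lemma bform_11 (D u v : 'M[R]_1) : bform D u v = D 0 0 * u 0 0 * v 0 0.
Proof. rewrite /bform mxE big_ord1 mxE big_ord1 !mxE.
change (@ord0 0) with (0 : 'I_1); ring.
Qed.

Lemma dot11 (u v : 'M[R]_1) : dot u v = u 0 0 * v 0 0.
Proof. by rewrite /dot mxE big_ord1 !mxE. Qed.

Lemma dot0 m (r : 'cV[R]_m) : dot 0 r = 0.
Proof. by rewrite /dot trmx0 mul0mx mxE. Qed.

Lemma T22E : T22 R = (block_mx 1%:M (- (1/2))%:M (- (1/2))%:M 1%:M : 'M_(1+1)).
Proof.
apply/matrixP=> i j; rewrite [LHS]mxE [RHS]mxE.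
case: splitP => k Hk; rewrite mxE; case: splitP => l Hl; rewrite !mxE ?(ord1 k) ?(ord1 l) /=;
  move: Hk Hl; rewrite ?(ord1 k) ?(ord1 l) /= => Hk Hl; rewrite Hk Hl //=.
Qed.
Definition NN (u v : R) := u ^+ 2 - u * v + v ^+ 2.

Lemma tri (u v : R) : 0 <= v -> v <= u -> u <= 1 ->
  NN u v <= 1/3 \/ NN (u-1) v <= 1/3 \/ NN (u-1) (v-1) <= 1/3.
Proof.
move=> h1 h2 h3; rewrite /NN.
have [h4|h4] := lerP (u + v) 1; have [h5|h5] := lerP (2*u - v) 1.
- left; nra.
- right; left; nra.
- case: (lerP (2*v) u) => h6; [right; left|right; right]; nra.
- case: (lerP (2*v) u) => h6; [right; left|right; right]; nra.
Qed.

Lemma NNC (u v : R) : NN u v = NN v u.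
Proof. rewrite /NN; ring. Qed.



Lemma sq4 (u v : R) : 0 <= u <= 1 -> 0 <= v <= 1 -> exists c d : int,
  NN (u + c%:~R) (v + d%:~R) <= 1/3.
Proof.
move=> /andP[hu0 hu1] /andP[hv0 hv1].
have m1 : (-1 : int)%:~R = -1 :> R by [].
have [h|h] := lerP v u.
- case: (tri hv0 h hu1) => [H|[H|H]].
  + by exists 0, 0; rewrite !addr0.
  + by exists (-1), 0; rewrite m1 addr0.
  + by exists (-1), (-1); rewrite m1.
- have h' : u <= v by apply: ltW.
  case: (tri hu0 h' hv1) => [H|[H|H]].
  + by exists 0, 0; rewrite !addr0 NNC.
  + by exists 0, (-1); rewrite m1 addr0 NNC.
  + by exists (-1), (-1); rewrite m1 NNC.
Qed.

Lemma cover (p1 p2 : R) : exists a b : int,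
  NN (a%:~R + p1) (b%:~R + p2) <= 1/3.
Proof.
set f1 := Num.floor p1; set f2 := Num.floor p2.
have l1 := floor_le p1; have u1 := floorD1_gt p1.
have l2 := floor_le p2; have u2 := floorD1_gt p2.
rewrite -/f1 -/f2 intrD in u1 u2; rewrite -/f1 -/f2 in l1 l2.
have H0 : 0 <= p1 - f1%:~R <= 1 by apply/andP; split; lra.
have H1 : 0 <= p2 - f2%:~R <= 1 by apply/andP; split; lra.
have [c [d H]] := sq4 H0 H1.
exists (c - f1), (d - f2); rewrite !intrB.
move: H; rewrite /NN; apply: le_trans; rewrite le_eqVlt; apply/orP; left; apply/eqP; ring.
Qed.

Section Glue.
Variables (g1 g2 : nat) (Q1 : 'M[R]_g1) (r1 s1 : 'cV[R]_g1) (Q2 : 'M[R]_g2) (r2 s2 : 'cV[R]_g2).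

Lemma q1E x (wa wb : 'cV[R]_1) :
  qform (Q1bar_shape Q1 r1 s1) (col_mx x (col_mx wa wb)) =
  bform Q1 x x + 2 * (dot x r1 * wa 0 0 + dot x s1 * wb 0 0) + NN (wa 0 0) (wb 0 0).
Proof.
rewrite qformE /Q1bar_shape T22E bform_block (bform_row (n1:=1) (n2:=1)) (bform_col (m1:=1) (m2:=1)).
rewrite (bform_block (m1:=1) (m2:=1) (n1:=1) (n2:=1)).
rewrite !bform_tr !bform_c1 !dot11 !mxE /= !mulr1n /NN; field => //.
Qed.

Lemma q2E y (wa wb : 'cV[R]_1) :
  qform (Q2bar_shape Q2 r2 s2) (col_mx (col_mx wa wb) y) =
  NN (wa 0 0) (wb 0 0) + 2 * (dot y r2 * wa 0 0 + dot y s2 * wb 0 0) + bform Q2 y y.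
Proof.
rewrite qformE /Q2bar_shape T22E bform_block (bform_row (n1:=1) (n2:=1)) (bform_col (m1:=1) (m2:=1)).
rewrite !(bform_row (n1:=1) (n2:=1)) (bform_col (m1:=1) (m2:=1)).
rewrite !bform_tr !bform_c1 !dot11 !mxE /= !mulr1n /NN; field => //.
Qed.

Lemma bMmx x y : bform (Mmx r1 s1 r2 s2) x y =
  4/3 * (dot x r1 * dot y r2 + dot x s1 * dot y s2) +
  2/3 * (dot x r1 * dot y s2 + dot x s1 * dot y r2).
Proof. by rewrite /Mmx bformD !bformZ !bformD !bform_outer. Qed.

Lemma qgE x (wa wb : 'cV[R]_1) y :
  qform (Qbar_glued Q1 r1 s1 Q2 r2 s2) (col_mx (col_mx x (col_mx wa wb)) y) =
  bform Q1 x x + 2 * (dot x r1 * wa 0 0 + dot x s1 * wb 0 0) + NN (wa 0 0) (wb 0 0)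
  + 2 * (dot y r2 * wa 0 0 + dot y s2 * wb 0 0) + bform Q2 y y
  + 2 * (4/3 * (dot x r1 * dot y r2 + dot x s1 * dot y s2) +
         2/3 * (dot x r1 * dot y s2 + dot x s1 * dot y r2)).
Proof.
rewrite qformE /Qbar_glued bform_block -qformE q1E.
rewrite !bform_col !bform_row bform_tr !bMmx.
rewrite (bform_row (n1:=1) (n2:=1)) (bform_col (m1:=1) (m2:=1)) !bform_tr !bform_c1; field => //.
Qed.

Definition F1 x := bform Q1 x x - 4/3 * (dot x r1 ^+ 2 + dot x r1 * dot x s1 + dot x s1 ^+ 2).
Definition F2 y := bform Q2 y y - 4/3 * (dot y r2 ^+ 2 + dot y r2 * dot y s2 + dot y s2 ^+ 2).
Definition P1 x := (4 * dot x r1 + 2 * dot x s1) / 3.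
Definition P2 x := (2 * dot x r1 + 4 * dot x s1) / 3.
Definition P1' y := (4 * dot y r2 + 2 * dot y s2) / 3.
Definition P2' y := (2 * dot y r2 + 4 * dot y s2) / 3.

Lemma q1F x (wa wb : 'cV[R]_1) :
  qform (Q1bar_shape Q1 r1 s1) (col_mx x (col_mx wa wb)) =
  F1 x + NN (wa 0 0 + P1 x) (wb 0 0 + P2 x).
Proof. by rewrite q1E /F1 /P1 /P2 /NN; field. Qed.

Lemma q2F y (wa wb : 'cV[R]_1) :
  qform (Q2bar_shape Q2 r2 s2) (col_mx (col_mx wa wb) y) =
  F2 y + NN (wa 0 0 + P1' y) (wb 0 0 + P2' y).
Proof. by rewrite q2E /F2 /P1' /P2' /NN; field. Qed.

Lemma qgF x (wa wb : 'cV[R]_1) y :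
  qform (Qbar_glued Q1 r1 s1 Q2 r2 s2) (col_mx (col_mx x (col_mx wa wb)) y) =
  F1 x + F2 y + NN (wa 0 0 + P1 x + P1' y) (wb 0 0 + P2 x + P2' y).
Proof. by rewrite qgE /F1 /F2 /P1 /P2 /P1' /P2' /NN; field. Qed.

Lemma q1F2 x (wa wb : 'cV[R]_1) :
  qform (Q1bar_shape Q1 r1 s1) (@col_mx R g1 2 1 x (col_mx wa wb)) =
  F1 x + NN (wa 0 0 + P1 x) (wb 0 0 + P2 x).
Proof. exact: q1F. Qed.
Lemma q2F2 y (wa wb : 'cV[R]_1) :
  qform (Q2bar_shape Q2 r2 s2) (@col_mx R 2 g2 1 (col_mx wa wb) y) =
  F2 y + NN (wa 0 0 + P1' y) (wb 0 0 + P2' y).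
Proof. exact: q2F. Qed.
Lemma qgF2 x (wa wb : 'cV[R]_1) y :
  qform (Qbar_glued Q1 r1 s1 Q2 r2 s2) (@col_mx R (g1 + 2) g2 1 (@col_mx R g1 2 1 x (col_mx wa wb)) y) =
  F1 x + F2 y + NN (wa 0 0 + P1 x + P1' y) (wb 0 0 + P2 x + P2' y).
Proof. exact: qgF. Qed.

Lemma F1_0 : F1 0 = 0.
Proof. by rewrite /F1 bform0 !dot0; ring. Qed.
Lemma F2_0 : F2 0 = 0.
Proof. by rewrite /F2 bform0 !dot0; ring. Qed.

Lemma F1_pos : pos_def (Q1bar_shape Q1 r1 s1) -> forall x, x != 0 -> 0 < F1 x.
Proof.
move=> pd x nx.
have := pd (col_mx x (col_mx (- P1 x)%:M (- P2 x)%:M)).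
rewrite q1F !mxE /= !mulr1n !addNr /NN => H.
have : 0 < F1 x + ((0:R) ^+ 2 - 0 * 0 + 0 ^+ 2).
  by apply: H; rewrite col_mx_eq0 negb_and nx.
by move=> h; nra.
Qed.

Lemma F2_pos : pos_def (Q2bar_shape Q2 r2 s2) -> forall y, y != 0 -> 0 < F2 y.
Proof.
move=> pd y ny.
have := pd (col_mx (col_mx (- P1' y)%:M (- P2' y)%:M) y).
rewrite q2F !mxE /= !mulr1n !addNr /NN => H.
have : 0 < F2 y + ((0:R) ^+ 2 - 0 * 0 + 0 ^+ 2).
  by apply: H; rewrite col_mx_eq0 negb_and ny orbT.
by move=> h; nra.
Qed.


Lemma intM (a : int) : (map_mx (fun z : int => z%:~R) (a%:M : 'M_1)) 0 0 = a%:~R :> R.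
Proof. by rewrite !mxE /= mulr1n. Qed.

Lemma F1_int : (forall xi : 'cV[int]_(g1+2), xi != 0 ->
    1 <= qform (Q1bar_shape Q1 r1 s1) (int_vec R xi)) ->
  forall x : 'cV[int]_g1, x != 0 -> 2/3 <= F1 (int_vec R x).
Proof.
move=> H x nx.
have [a [b Hab]] := cover (P1 (int_vec R x)) (P2 (int_vec R x)).
have := H (col_mx x (col_mx a%:M b%:M)).
rewrite col_mx_eq0 negb_and nx => /(_ isT).
rewrite /int_vec map_col_mx (@map_col_mx _ _ _ 1 1) q1F2 !intM -/(int_vec R x).
move: Hab; lra.
Qed.

Lemma F2_int : (forall xi : 'cV[int]_(2+g2), xi != 0 ->
    1 <= qform (Q2bar_shape Q2 r2 s2) (int_vec R xi)) ->
  forall y : 'cV[int]_g2, y != 0 -> 2/3 <= F2 (int_vec R y).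
Proof.
move=> H y ny.
have [a [b Hab]] := cover (P1' (int_vec R y)) (P2' (int_vec R y)).
have := H (col_mx (col_mx a%:M b%:M) y).
rewrite col_mx_eq0 negb_and ny orbT => /(_ isT).
rewrite /int_vec map_col_mx (@map_col_mx _ _ _ 1 1) q2F2 !intM -/(int_vec R y).
move: Hab; lra.
Qed.


Definition e1 (T : zmodType) (v : 'cV[T]_(g1+2)) : 'cV[T]_(g1+2+g2) := col_mx v 0.
Definition e2 (T : zmodType) (v : 'cV[T]_(2+g2)) : 'cV[T]_(g1+2+g2) :=
  col_mx (col_mx 0 (usubmx v)) (dsubmx v).

Lemma decomp1 (T : Type) (v : 'M[T]_(g1+2,1)) : exists x (wa wb : 'M[T]_1),
  v = @col_mx T g1 2 1 x (col_mx wa wb).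
Proof.
exists (usubmx v), (usubmx (dsubmx v : 'M_(1+1,1))), (dsubmx (dsubmx v : 'M_(1+1,1))).
by rewrite vsubmxK vsubmxK.
Qed.

Lemma decomp2 (T : Type) (v : 'M[T]_(2+g2,1)) : exists (wa wb : 'M[T]_1) y,
  v = @col_mx T 2 g2 1 (col_mx wa wb) y.
Proof.
exists (usubmx (usubmx v : 'M_(1+1,1))), (dsubmx (usubmx v : 'M_(1+1,1))), (dsubmx v).
by rewrite vsubmxK vsubmxK.
Qed.

Lemma decomp (T : Type) (v : 'M[T]_(g1+2+g2,1)) : exists x (wa wb : 'M[T]_1) y,
  v = @col_mx T (g1+2) g2 1 (@col_mx T g1 2 1 x (col_mx wa wb)) y.
Proof.
have [x [wa [wb E]]] := decomp1 (usubmx v).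
by exists x, wa, wb, (dsubmx v); rewrite -E vsubmxK.
Qed.

Lemma map0 m n : map_mx (fun z : int => z%:~R) (0 : 'M[int]_(m,n)) = 0 :> 'M[R]_(m,n).
Proof. by apply/matrixP => i j; rewrite !mxE. Qed.

Lemma int_vecN m (v : 'cV[int]_m) : int_vec R (- v) = - int_vec R v.
Proof. by apply/matrixP => i j; rewrite !mxE mulrNz. Qed.

Lemma qformN m (Q : 'M[R]_m) v : qform Q (- v) = qform Q v.
Proof.
rewrite /qform.
have -> : (- v)^T = - v^T by apply/matrixP => i j; rewrite !mxE.
by rewrite mulNmx mulNmx mulmxN opprK.
Qed.

Lemma int_vec_e1 (v : 'cV[int]_(g1+2)) : int_vec R (e1 v) = e1 (int_vec R v).
Proof. by rewrite /int_vec /e1 map_col_mx map0. Qed.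

Lemma int_vec_e2 (v : 'cV[int]_(2+g2)) : int_vec R (e2 v) = e2 (int_vec R v).
Proof. by rewrite /int_vec /e2 !map_col_mx map0 map_usubmx map_dsubmx. Qed.

Lemma e1N (T : zmodType) (v : 'cV[T]_(g1+2)) : e1 (- v) = - e1 v.
Proof. by rewrite /e1 opp_col_mx oppr0. Qed.

Lemma e2N (T : zmodType) (v : 'cV[T]_(2+g2)) : e2 (- v) = - e2 v.
Proof.
rewrite /e2 -[v]vsubmxK opp_col_mx !col_mxKu !col_mxKd.
by rewrite !opp_col_mx oppr0.
Qed.

Lemma e1_eq0 (T : zmodType) (v : 'cV[T]_(g1+2)) : e1 v = 0 -> v = 0.
Proof. by move/eqP; rewrite /e1 col_mx_eq0 => /andP[/eqP]. Qed.

Lemma e2_eq0 (T : zmodType) (v : 'cV[T]_(2+g2)) : e2 v = 0 -> v = 0.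
Proof.
move/eqP; rewrite /e2 !col_mx_eq0 => /andP[/andP[_ /eqP h1] /eqP h2].
by rewrite -[v]vsubmxK h1 h2 col_mx0.
Qed.

Lemma P1'0 : P1' 0 = 0. Proof. by rewrite /P1' !dot0; ring. Qed.
Lemma P2'0 : P2' 0 = 0. Proof. by rewrite /P2' !dot0; ring. Qed.
Lemma P10 : P1 0 = 0. Proof. by rewrite /P1 !dot0; ring. Qed.
Lemma P20 : P2 0 = 0. Proof. by rewrite /P2 !dot0; ring. Qed.

Lemma qg_e1 (v : 'cV[R]_(g1+2)) :
  qform (Qbar_glued Q1 r1 s1 Q2 r2 s2) (e1 v) = qform (Q1bar_shape Q1 r1 s1) v.
Proof.
have [x [wa [wb ->]]] := decomp1 v.
by rewrite /e1 qgF2 q1F2 F2_0 P1'0 P2'0 !addr0.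
Qed.

Lemma qg_e2 (v : 'cV[R]_(2+g2)) :
  qform (Qbar_glued Q1 r1 s1 Q2 r2 s2) (e2 v) = qform (Q2bar_shape Q2 r2 s2) v.
Proof.
have [wa [wb [y ->]]] := decomp2 v.
by rewrite /e2 col_mxKu col_mxKd qgF2 q2F2 F1_0 P10 P20 !addr0 add0r.
Qed.


Lemma NN_ge0 (a b : R) : 0 <= NN a b.
Proof. rewrite /NN; nra. Qed.

Lemma NN_gt0 (a b : R) : (a != 0) || (b != 0) -> 0 < NN a b.
Proof.
move=> h; have : 0 < a ^+ 2 + b ^+ 2.
  case/orP: h => h.
  - have : 0 < a ^+ 2 by rewrite lt_def sqrf_eq0 h sqr_ge0.
    by move=> ?; nra.
  - have : 0 < b ^+ 2 by rewrite lt_def sqrf_eq0 h sqr_ge0.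
    by move=> ?; nra.
rewrite /NN => ?; nra.
Qed.

Lemma mx1_eq0 (T : zmodType) (w : 'M[T]_1) : (w == 0) = (w 0 0 == 0).
Proof.
apply/eqP/eqP => [->|h]; first by rewrite mxE.
by apply/matrixP => i j; rewrite (ord1 i) (ord1 j) h mxE.
Qed.

Lemma glued_ws k1 k2 k (A1 : 'M[int]_(g1+2,k1)) (A2 : 'M[int]_(2+g2,k2))
    (A : 'M[int]_(g1+2+g2,k)) :
  Q2^T = Q2 ->
  well_suited (Q1bar_shape Q1 r1 s1) A1 -> well_suited (Q2bar_shape Q2 r2 s2) A2 ->
  (forall j, exists j', col j' A = e1 (col j A1)) ->
  (forall j, exists j', col j' A = e2 (col j A2)) ->
  (forall j', (exists j, col j' A = e1 (col j A1)) \/ (exists j, col j' A = e2 (col j A2))) ->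
  well_suited (Qbar_glued Q1 r1 s1 Q2 r2 s2) A.
Proof.
move=> sQ2 [sym1 [pd1 ws1]] [sym2 [pd2 ws2]] hc1 hc2 hc3.
split; [|split].
- rewrite /Qbar_glued tr_block_mx sym1 !tr_row_mx !tr_col_mx !trmxK sQ2.
  by rewrite (@tr_row_mx _ _ 1 1) (@tr_col_mx _ 1 1) !trmxK.
- move=> v nv; have [x [wa [wb [y E]]]] := decomp v.
  rewrite E qgF2.
  have F1p : 0 <= F1 x.
    by have [->|nx] := eqVneq x 0; [rewrite F1_0|apply: ltW; apply: F1_pos].
  have F2p : 0 <= F2 y.
    by have [->|ny] := eqVneq y 0; [rewrite F2_0|apply: ltW; apply: F2_pos].
  have Np := NN_ge0 (wa 0 0 + P1 x + P1' y) (wb 0 0 + P2 x + P2' y).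
  have [x0|nx] := eqVneq x 0; last by have := F1_pos pd1 nx; lra.
  have [y0|ny] := eqVneq y 0; last by have := F2_pos pd2 ny; lra.
  move: nv; rewrite E x0 y0 P10 P20 P1'0 P2'0 !addr0 F1_0 F2_0 !add0r.
  rewrite !col_mx_eq0 !eqxx /= andbT => h.
  apply: NN_gt0; rewrite -!mx1_eq0.
  case: (eqVneq wa 0) => [wa0|//]; case: (eqVneq wb 0) => [wb0|]; last by rewrite orbT.
  by move: h; rewrite wa0 wb0 col_mx0 eqxx.
- move=> xi nxi.
  have back : (exists j, col j A = xi \/ col j A = - xi) ->
      qform (Qbar_glued Q1 r1 s1 Q2 r2 s2) (int_vec R xi) = 1.
    case=> j' Hj; case: (hc3 j') => [[j Hj1]|[j Hj2]].
    + have [u [Eu Hu]] : exists u, xi = e1 u /\ (col j A1 = u \/ col j A1 = - u).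
        case: Hj => H.
        * by exists (col j A1); split; [rewrite -H Hj1|left].
        * exists (- col j A1); split; last by right; rewrite opprK.
          by rewrite e1N -Hj1 H opprK.
      have nu : u != 0.
        by apply: contra nxi => /eqP u0; rewrite Eu u0 /e1 col_mx0.
      rewrite Eu int_vec_e1 qg_e1.
      by apply/(proj2 (proj2 (ws1 u nu))); exists j.
    + have [u [Eu Hu]] : exists u, xi = e2 u /\ (col j A2 = u \/ col j A2 = - u).
        case: Hj => H.
        * by exists (col j A2); split; [rewrite -H Hj2|left].
        * exists (- col j A2); split; last by right; rewrite opprK.
          by rewrite e2N -Hj2 H opprK.
      have nu : u != 0.
        apply: contra nxi => /eqP u0; rewrite Eu u0 /e2.
        by rewrite -[0 : 'cV_(2+g2)]col_mx0 col_mxKu col_mxKd !col_mx0.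
      rewrite Eu int_vec_e2 qg_e2.
      by apply/(proj2 (proj2 (ws2 u nu))); exists j.
  have [x [wa [wb [y Exi]]]] := decomp xi.
  have [x0|nx] := eqVneq x 0.
    set et := @col_mx int 2 g2 1 (col_mx wa wb) y.
    have Exe : xi = e2 et by rewrite Exi x0 /e2 col_mxKu col_mxKd.
    have ne : et != 0.
      apply: contra nxi => /eqP u0; rewrite Exe u0 /e2.
      by rewrite -[0 : 'cV_(2+g2)]col_mx0 col_mxKu col_mxKd !col_mx0.
    have [h1 h2] := ws2 et ne.
    have Eq : qform (Qbar_glued Q1 r1 s1 Q2 r2 s2) (int_vec R xi) =
              qform (Q2bar_shape Q2 r2 s2) (int_vec R et) by rewrite Exe int_vec_e2 qg_e2.
    split; first by rewrite Eq.
    split; last exact: back.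
    move=> H1; have [j Hj] := proj1 h2 (etrans (esym Eq) H1).
    have [j' Hj'] := hc2 j; exists j'; rewrite Hj' Exe.
    by case: Hj => ->; [left|right; rewrite e2N].
  have [y0|ny] := eqVneq y 0.
    set et := @col_mx int g1 2 1 x (col_mx wa wb).
    have Exe : xi = e1 et by rewrite Exi y0 /e1.
    have ne : et != 0.
      by apply: contra nxi => /eqP u0; rewrite Exe u0 /e1 col_mx0.
    have [h1 h2] := ws1 et ne.
    have Eq : qform (Qbar_glued Q1 r1 s1 Q2 r2 s2) (int_vec R xi) =
              qform (Q1bar_shape Q1 r1 s1) (int_vec R et) by rewrite Exe int_vec_e1 qg_e1.
    split; first by rewrite Eq.
    split; last exact: back.
    move=> H1; have [j Hj] := proj1 h2 (etrans (esym Eq) H1).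
    have [j' Hj'] := hc1 j; exists j'; rewrite Hj' Exe.
    by case: Hj => ->; [left|right; rewrite e1N].
  have big : 4/3 <= qform (Qbar_glued Q1 r1 s1 Q2 r2 s2) (int_vec R xi).
    rewrite Exi /int_vec map_col_mx map_col_mx (@map_col_mx _ _ _ 1 1) qgF2.
    rewrite -/(int_vec R x) -/(int_vec R y).
    have := F1_int (fun z hz => proj1 (ws1 z hz)) nx.
    have := F2_int (fun z hz => proj1 (ws2 z hz)) ny.
    have := NN_ge0 ((int_vec R wa) 0 0 + P1 (int_vec R x) + P1' (int_vec R y))
                   ((int_vec R wb) 0 0 + P2 (int_vec R x) + P2' (int_vec R y)).
    rewrite /int_vec; lra.
  split; first lra.
  split; last exact: back.
    rewrite -/(int_vec R wa) -/(int_vec R wb); lra.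
Qed.


Lemma e2col (T : zmodType) (a : 'cV[T]_2) (b : 'cV[T]_g2) :
  e2 (@col_mx T 2 g2 1 a b) = col_mx (col_mx (0 : 'cV[T]_g1) a) b.
Proof. by rewrite /e2 col_mxKu col_mxKd. Qed.
End Glue.
Definition i0 : 'I_2 := Ordinal (isT : 0 < 2)%N.
Definition i1 : 'I_2 := Ordinal (isT : 1 < 2)%N.
Lemma qf2 (D : 'M[R]_2) v : qform D v =
  v i0 0 ^+ 2 * D i0 i0 + v i0 0 * v i1 0 * (D i0 i1 + D i1 i0) + v i1 0 ^+ 2 * D i1 i1.
Proof.
rewrite /qform !mxE !big_ord_recl !big_ord0 !mxE !big_ord_recl !big_ord0 !mxE /=.
rewrite (_ : lift ord0 ord0 = i1); last by apply: val_inj.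
rewrite (_ : ord0 = i0); last by apply: val_inj.
ring.
Qed.

Definition k0 : 'I_3 := Ordinal (isT : 0 < 3)%N.
Definition k1 : 'I_3 := Ordinal (isT : 1 < 3)%N.
Definition k2 : 'I_3 := Ordinal (isT : 2 < 3)%N.

Lemma Ecol k i : (int_vec R (col k E23)) i 0 = (if k == 2 :> nat then 1 else (i == k :> nat)%:R).
Proof. by rewrite !mxE; case: (k == 2 :> nat) => //=; case: (i == k :> nat). Qed.

Lemma D22 (D : 'M[R]_2) : D^T = D -> qform D (int_vec R (col k0 E23)) = 1 ->
  qform D (int_vec R (col k1 E23)) = 1 -> qform D (int_vec R (col k2 E23)) = 1 -> D = T22 R.
Proof.
move=> sD; rewrite !qf2 !Ecol /= => h0 h1 h2.
have s01 : D i0 i1 = D i1 i0 by rewrite -{1}sD mxE.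
apply/matrixP => i j; rewrite mxE.
have [->|->] : i = i0 \/ i = i1 by case: i => [[|[|]]] //= ?; [left|right]; apply: val_inj.
all: have [->|->] : j = i0 \/ j = i1 by case: j => [[|[|]]] //= ?; [left|right]; apply: val_inj.
all: rewrite /=; move: h0 h1 h2; rewrite ?expr1n ?expr0n /= ?mul1r ?mul0r ?mulr1 ?add0r ?addr0 => h0 h1 h2; lra.
Qed.

Lemma qf_dr g (Q : 'M[R]_(g+2)) (V : 'cV[R]_2) : qform Q (col_mx 0 V) = qform (drsubmx Q) V.
Proof. by rewrite -{1}[Q]submxK qformE bform_block !bform0 bform0r !add0r. Qed.

Lemma qf_ul g (Q : 'M[R]_(2+g)) (V : 'cV[R]_2) : qform Q (col_mx V 0) = qform (ulsubmx Q) V.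
Proof. by rewrite -{1}[Q]submxK qformE bform_block !bform0 !bform0r !addr0. Qed.

Lemma E23nz (k : 'I_3) : col k E23 != 0.
Proof.
apply/eqP => h; have h0 := congr1 (fun M : 'M[int]_(2,1) => M i0 0) h.
have h1 := congr1 (fun M : 'M[int]_(2,1) => M i1 0) h.
by move: h0 h1; rewrite !mxE; clear h; case: k => [[|[|[|]]]] //=.
Qed.

End BF.

Section Cols.
Variables (g1 n1 g2 n2 : nat) (B : 'M[int]_(g1, n1)) (b1 b2 : 'rV[int]_n1)
    (C : 'M[int]_(g2, n2)) (c1 c2 : 'rV[int]_n2).

Lemma colL (T : Type) m p q (X : 'M[T]_(m,p)) (Y : 'M[T]_(m,q)) j :
  col (lshift q j) (row_mx X Y) = col j X.
Proof. by rewrite -col_lsubmx row_mxKl. Qed.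
Lemma colR (T : Type) m p q (X : 'M[T]_(m,p)) (Y : 'M[T]_(m,q)) j :
  col (rshift p j) (row_mx X Y) = col j Y.
Proof. by rewrite -col_rsubmx row_mxKr. Qed.

Lemma c1L j : col (lshift 3 j) (A1mx B b1 b2) = col_mx (col j B) (col j (col_mx b1 b2)).
Proof. by rewrite /A1mx /A2mx /Amx ?block_mxEv; rewrite !(col_col_mx, @col_col_mx _ 1 1, colL, colR, col0). Qed.
Lemma c1R k : col (rshift n1 k) (A1mx B b1 b2) = col_mx 0 (col k E23).
Proof. by rewrite /A1mx /A2mx /Amx ?block_mxEv; rewrite !(col_col_mx, @col_col_mx _ 1 1, colL, colR, col0). Qed.
Lemma c2L j : col (lshift 3 j) (A2mx C c1 c2) =
   @col_mx _ 2 g2 1 (col j (col_mx c1 c2)) (col j C).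
Proof. by rewrite /A1mx /A2mx /Amx ?block_mxEv; rewrite !(col_col_mx, @col_col_mx _ 1 1, colL, colR, col0). Qed.
Lemma c2R k : col (rshift n2 k) (A2mx C c1 c2) = col_mx (col k E23) 0.
Proof. by rewrite /A1mx /A2mx /Amx ?block_mxEv; rewrite !(col_col_mx, @col_col_mx _ 1 1, colL, colR, col0). Qed.

Lemma cAL1 j : col (lshift 3 (lshift n2 j)) (Amx B b1 b2 C c1 c2) =
  col_mx (col_mx (col j B) (col j (col_mx b1 b2))) 0.
Proof. by rewrite /A1mx /A2mx /Amx ?block_mxEv; rewrite !(col_col_mx, @col_col_mx _ 1 1, colL, colR, col0). Qed.
Lemma cAL2 j : col (lshift 3 (rshift n1 j)) (Amx B b1 b2 C c1 c2) =
  col_mx (col_mx 0 (col j (col_mx c1 c2))) (col j C).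
Proof. by rewrite /A1mx /A2mx /Amx ?block_mxEv; rewrite !(col_col_mx, @col_col_mx _ 1 1, colL, colR, col0). Qed.
Lemma cAR k : col (rshift (n1 + n2) k) (Amx B b1 b2 C c1 c2) =
  col_mx (col_mx 0 (col k E23)) 0.
Proof. by rewrite /A1mx /A2mx /Amx ?block_mxEv; rewrite !(col_col_mx, @col_col_mx _ 1 1, colL, colR, col0). Qed.
End Cols.


Lemma int_vec_col0 (R : realType) g (V : 'cV[int]_2) :
  int_vec R (col_mx (0 : 'cV[int]_g) V) = col_mx 0 (int_vec R V).
Proof. by rewrite /int_vec map_col_mx map0. Qed.
Lemma int_vec_col0r (R : realType) g (V : 'cV[int]_2) :
  int_vec R (col_mx V (0 : 'cV[int]_g)) = col_mx (int_vec R V) 0.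
Proof. by rewrite /int_vec map_col_mx map0. Qed.

Theorem lemma4p2p5 (R : realType) (g1 n1 g2 n2 : nat)
    (B : 'M[int]_(g1, n1)) (b1 b2 : 'rV[int]_n1)
    (C : 'M[int]_(g2, n2)) (c1 c2 : 'rV[int]_n2)
    (Q1bar : 'M[R]_(g1 + 2)) (Q2bar : 'M[R]_(2 + g2)) :
  simple_mx (A1mx B b1 b2) -> totally_unimodular (A1mx B b1 b2) ->
  simple_mx (A2mx C c1 c2) -> totally_unimodular (A2mx C c1 c2) ->
  well_suited Q1bar (A1mx B b1 b2) ->
  well_suited Q2bar (A2mx C c1 c2) ->
  exists (Q1 : 'M[R]_g1) (r1 s1 : 'cV[R]_g1)
         (Q2 : 'M[R]_g2) (r2 s2 : 'cV[R]_g2),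
    [/\ Q1bar = Q1bar_shape Q1 r1 s1,
        Q2bar = Q2bar_shape Q2 r2 s2 &
        well_suited (Qbar_glued Q1 r1 s1 Q2 r2 s2) (Amx B b1 b2 C c1 c2)].
Proof.
move=> _ _ _ _ ws1 ws2.
have Edr : drsubmx Q1bar = T22 R.
  have q1 : forall k, qform (drsubmx Q1bar) (int_vec R (col k E23)) = 1.
    move=> k; rewrite -qf_dr -int_vec_col0 -(c1R B b1 b2).
    apply/(proj2 (proj2 (proj2 ws1) _ _)); last by exists (rshift n1 k); left.
    by rewrite c1R col_mx_eq0 negb_and E23nz orbT.
  apply: D22 => //; by rewrite trmx_drsub (proj1 ws1).
have Eul : ulsubmx Q2bar = T22 R.
  have q1 : forall k, qform (ulsubmx Q2bar) (int_vec R (col k E23)) = 1.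
    move=> k; rewrite -qf_ul -int_vec_col0r -(c2R C c1 c2).
    apply/(proj2 (proj2 (proj2 ws2) _ _)); last by exists (rshift n2 k); left.
    by rewrite c2R col_mx_eq0 negb_and E23nz.
  apply: D22 => //; by rewrite trmx_ulsub (proj1 ws2).
exists (ulsubmx Q1bar), (lsubmx (ursubmx Q1bar : 'M_(g1, 1+1))),
  (rsubmx (ursubmx Q1bar : 'M_(g1, 1+1))),
  (drsubmx Q2bar), (lsubmx (dlsubmx Q2bar : 'M_(g2, 1+1))),
  (rsubmx (dlsubmx Q2bar : 'M_(g2, 1+1))).
have E1 : Q1bar = Q1bar_shape (ulsubmx Q1bar) (lsubmx (ursubmx Q1bar : 'M_(g1, 1+1)))
  (rsubmx (ursubmx Q1bar : 'M_(g1, 1+1))).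
  rewrite /Q1bar_shape -(@tr_row_mx _ _ 1 1) hsubmxK trmx_ursub (proj1 ws1) -Edr.
  by rewrite submxK.
have E2 : Q2bar = Q2bar_shape (drsubmx Q2bar) (lsubmx (dlsubmx Q2bar : 'M_(g2, 1+1)))
  (rsubmx (dlsubmx Q2bar : 'M_(g2, 1+1))).
  rewrite /Q2bar_shape -(@tr_row_mx _ _ 1 1) hsubmxK trmx_dlsub (proj1 ws2) -Eul.
  by rewrite submxK.
split => //.
apply: (glued_ws (A1 := A1mx B b1 b2) (A2 := A2mx C c1 c2)).
- by rewrite trmx_drsub (proj1 ws2).
- by rewrite -E1.
- by rewrite -E2.
- move=> j; rewrite -(splitK j); case: (split j) => [j0|k] /=.
  + by exists (lshift 3 (lshift n2 j0)); rewrite cAL1 c1L.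
  + by exists (rshift (n1 + n2) k); rewrite cAR c1R.
- move=> j; rewrite -(splitK j); case: (split j) => [j0|k] /=.
  + by exists (lshift 3 (rshift n1 j0)); rewrite cAL2 c2L e2col.
  + by exists (rshift (n1 + n2) k); rewrite cAR c2R e2col.
- move=> j'; rewrite -(splitK j'); case: (split j') => [j|k] /=.
  + rewrite -(splitK j); case: (split j) => [j0|j0] /=.
    * by left; exists (lshift 3 j0); rewrite cAL1 c1L.
    * by right; exists (lshift 3 j0); rewrite cAL2 c2L e2col.
  + by left; exists (rshift n1 k); rewrite cAR c1R.
Qed.
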